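(* Let $\mathcal{M}$ be a CTMC with state space $S$, nonnegative reward function $\rho\colon S\to\mathbb{R}_{\geq0}$, and a unique absorbing goal state $g$ with $\rho(g)>0$. Let $s\in S$ with $\rho(s)=0$ and $P(s,s)\in(0,1)$. Let $\mathcal{M}^*$ be as $\mathcal{M}$ except that $P^{\mathcal{M}^*}(s,s)=0$ and $P^{\mathcal{M}^*}(s,s')=\frac{P^{\mathcal{M}}(s,s')}{1-P^{\mathcal{M}}(s,s)}$ for all $s'\neq s$. Then $\mathrm{Pr}^{\mathcal{M}}_s(\lozenge_{\leq r}g)=\mathrm{Pr}^{\mathcal{M}^*}_s(\lozenge_{\leq r}g)$ for all $r\geq0$.
   Context: A CTMC has finite state set $S$, transition probabilities $P\colon S\to\mathrm{Distr}(S)$, exit rates $E\colon S\to\mathbb{R}_{>0}$, an initial state and a labeling. A timed path is $\sigma=s_0t_0s_1t_1\dots$ with $t_i>0$ the residence time in $s_i$ (exponential with rate $E(s_i)$; then a jump to $s_{i+1}$ with probability $P(s_i,s_{i+1})$). $\sigma@t=s_m$ for $m$ the smallest index with $t\leq\sum_{i=0}^mt_i$. Cumulative reward until $t$: $\rho(\sigma,t)=\sum_{j=0}^{m-1}t_j\rho(s_j)+(t-\sum_{j=0}^{m-1}t_j)\rho(s_m)$ where $\sigma@t=s_m$. $\mathrm{Pr}^{\mathcal{M}}_s(\lozenge_{\leq r}g)$ is the probability that $\mathcal{M}$ started in $s$ reaches $g$ while having accumulated reward at most $r$. *)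

(* Defs.v *)
From HB Require Import structures.
From mathcomp Require Import all_boot all_order all_algebra.
From mathcomp Require Import all_classical all_reals all_analysis.
From mathcomp Require Import exponential_distribution.
Set Implicit Arguments. Unset Strict Implicit. Unset Printing Implicit Defensive.
Import Order.TTheory GRing.Theory Num.Theory.
Local Open Scope classical_set_scope.
Local Open Scope ring_scope.

Section CTMC.
Context {R : realType} {S : finType}.

(** A CTMC (transition probabilities P, exit rates E); initial state and
    labeling are irrelevant for the statement (the start state is a parameter,
    the goal is the state g). *)
Definition is_ctmc (P : S -> S -> R) (E : S -> R) : Prop :=
  [/\ (forall u v, 0 <= P u v), (forall u, \sum_(v : S) P u v = 1)
    & (forall u, 0 < E u)].

(** A timed path given by a finite prefix of states [ss] with residence
    times [ts], after which it stays in the (absorbing) state [gl] forever.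
    [state_at ss ts gl t] is sigma@t: the state s_m for the smallest m with
    t <= t_0 + ... + t_m. *)
Fixpoint state_at (ss : seq S) (ts : seq R) (gl : S) (t : R) : S :=
  match ss, ts with
  | s0 :: ss', t0 :: ts' => if t <= t0 then s0 else state_at ss' ts' gl (t - t0)
  | _, _ => gl
  end.

Fixpoint reward_at (rho : S -> R) (ss : seq S) (ts : seq R) (gl : S) (t : R) : R :=
  match ss, ts with
  | s0 :: ss', t0 :: ts' =>
      if t <= t0 then t * rho s0 else t0 * rho s0 + reward_at rho ss' ts' gl (t - t0)
  | _, _ => t * rho gl
  end.

Definition reach_event (rho : S -> R) (g : S) (r : R) (ss : seq S) (ts : seq R) : Prop :=
  exists t : R, 0 <= t /\ state_at ss ts g t = g /\ reward_at rho ss ts g t <= r.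

(** probability that independent residence times t_i ~ Exp(rates_i)
    satisfy [Ev [:: t_0; ...; t_(n-1)]] (product of exponential laws,
    written as iterated integrals against the exponential densities). *)
Fixpoint time_prob (rates : seq R) (Ev : seq R -> Prop) : \bar R :=
  match rates with
  | [::] => (if `[< Ev [::] >] then 1 else 0)%:E
  | l :: rs => (\int[lebesgue_measure]_(t in [set: R])
                 ((exponential_pdf l t)%:E * time_prob rs (fun ts => Ev (t :: ts))))%E
  end.

Fixpoint path_weight (P : S -> S -> R) (ss : seq S) (g : S) : R :=
  match ss with
  | [::] => 1
  | x :: ss' => P x (head g ss') * path_weight P ss' g
  end.

(** Pr_s(<>_{<= r} g): sum over the first-hitting prefixes s = s_0 ... s_(n-1)
    (all different from g) followed by g, of the probability of the cylinder
    times the probability (over the residence times) of the reachability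
    event. *)
Definition reach_prob (P : S -> S -> R) (E : S -> R) (rho : S -> R)
    (g s : S) (r : R) : \bar R :=
  (\sum_(0 <= n <oo)
     \sum_(ss : n.-tuple S | all (fun x => x != g) ss && (head g ss == s))
       ((path_weight P ss g)%:E * time_prob (map E ss) (reach_event rho g r ss)))%E.

Definition remove_selfloop (P : S -> S -> R) (s : S) : S -> S -> R :=
  fun u v => if u == s then (if v == s then 0 else P s v / (1 - P s s)) else P u v.

End CTMC.

(* Main.v *)
Require Import Defs.
From HB Require Import structures.
From mathcomp Require Import all_boot all_order all_algebra.
From mathcomp Require Import all_classical all_reals all_analysis.
From mathcomp Require Import exponential_distribution measurable_realfun ring lra.
Set Implicit Arguments. Unset Strict Implicit. Unset Printing Implicit Defensive.
Import Order.TTheory GRing.Theory Num.Theory.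
Local Open Scope classical_set_scope.
Local Open Scope ring_scope.

Section TP.
Context {R : realType}.
Local Open Scope ereal_scope.

Lemma time_prob_ge0 (rates : seq R) Ev : all (fun l => (0 <= l)%R) rates ->
  0 <= time_prob rates Ev.
Proof.
elim: rates Ev => [|l rs IH] Ev /=.
  by move=> _; case: ifP; rewrite lee_fin.
move=> /andP[l0 rs0]; apply: integral_ge0 => t _.
by apply: mule_ge0; [rewrite lee_fin exponential_pdf_ge0|exact: IH].
Qed.

Lemma time_prob_ext (rates : seq R) (Ev1 Ev2 : seq R -> Prop) :
  (forall ts, size ts = size rates -> all (fun t => (0 <= t)%R) ts ->
     (Ev1 ts <-> Ev2 ts)) ->
  time_prob rates Ev1 = time_prob rates Ev2.
Proof.
elim: rates Ev1 Ev2 => [|l rs IH] Ev1 Ev2 H /=.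
  by rewrite (_ : `[< Ev1 [::] >] = `[< Ev2 [::] >])//; apply/asboolP/asboolP; apply H.
apply: eq_integral => t _.
have [t0|t0] := ltP t 0%R.
  by rewrite lt0_exponential_pdf// !mul0e.
congr (_ * _); apply: IH => ts sz ts0; apply: H => /=; first by rewrite sz.
by rewrite t0.
Qed.

Lemma pdf_const (l : R) (c : \bar R) : (0 < l)%R -> 0 <= c ->
  \int[lebesgue_measure]_(t in [set: R]) ((exponential_pdf l t)%:E * c) = c.
Proof.
move=> l0 c0; rewrite ge0_integralZr//.
- by rewrite integral_exponential_pdf// mul1e.
- by apply/measurable_EFinP; exact: measurable_exponential_pdf.
- by move=> t _; rewrite lee_fin exponential_pdf_ge0// ltW.
Qed.


Variable S : finType.

Fixpoint Wt (rho : S -> R) (y : seq S) (ts : seq R) : R :=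
  match y, ts with u :: y', t :: ts' => (t * rho u + Wt rho y' ts')%R | _, _ => 0%R end.
Fixpoint Tsum (y : seq S) (ts : seq R) : R :=
  match y, ts with u :: y', t :: ts' => (t + Tsum y' ts')%R | _, _ => 0%R end.

Lemma Tsum_ge0 y ts : all (fun t => (0 <= t)%R) ts -> (0 <= Tsum y ts)%R.
Proof.
elim: y ts => [|u y IH] [|t ts] //= /andP[t0 ts0]; exact: addr_ge0 t0 (IH _ ts0).
Qed.

Lemma state_before (g : S) x ts t : x != [::] -> all (fun x => x != g) x ->
  size ts = size x -> (t <= Tsum x ts)%R -> state_at x ts g t != g.
Proof.
elim: x ts t => [|u x IH] [|t0 ts] t //= _ /andP[ug xg] [sz] tle.
case: ifP => // /negbT; rewrite -ltNge => lt.
have [xe|xn] := eqVneq x [::].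
  by move: tle; rewrite xe /= addr0 => /(lt_le_trans lt); rewrite ltxx.
by apply: IH => //; rewrite lerBlDl.
Qed.

Lemma state_after (rho : S -> R) (g : S) x ts t : all (fun t => (0 <= t)%R) ts ->
  (Tsum x ts < t)%R ->
  state_at x ts g t = g /\ reward_at rho x ts g t = (Wt rho x ts + (t - Tsum x ts) * rho g)%R.
Proof.
elim: x ts t => [|u x IH] [|t0 ts] t //=; rewrite ?add0r ?subr0 //.
move=> /andP[t00 ts0] lt.
have T0 := Tsum_ge0 x ts0.
have -> : (t <= t0)%R = false.
  by apply/negbTE; rewrite -ltNge; apply: le_lt_trans lt; rewrite lerDl.
have [-> ->] := IH ts (t - t0)%R ts0 ltac:(by rewrite ltrBrDl).
split => //; rewrite opprD addrA; ring.
Qed.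

Lemma reach_eventE (rho : S -> R) (g : S) (r : R) x ts : (0 < rho g)%R ->
  x != [::] -> all (fun x => x != g) x ->
  size ts = size x -> all (fun t => (0 <= t)%R) ts ->
  reach_event rho g r x ts <-> (Wt rho x ts < r)%R.
Proof.
move=> g0 xn xg sz ts0; split.
  move=> [t [t0 [st rw]]].
  have lt : (Tsum x ts < t)%R.
    rewrite ltNge; apply/negP => /(state_before xn xg sz); by rewrite st eqxx.
  have [_ rw'] := state_after rho g ts0 lt.
  apply: lt_le_trans rw; rewrite rw' ltrDl; apply: mulr_gt0 => //; by rewrite subr_gt0.
move=> lt; exists (Tsum x ts + (r - Wt rho x ts) / rho g)%R.
have q0 : (0 < (r - Wt rho x ts) / rho g)%R by apply: divr_gt0; rewrite ?subr_gt0.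
have lt' : (Tsum x ts < Tsum x ts + (r - Wt rho x ts) / rho g)%R by rewrite ltrDl.
have [st rw] := state_after rho g ts0 lt'.
split; first by apply: addr_ge0 (Tsum_ge0 _ ts0) (ltW q0).
split => //; rewrite rw (addrC (Tsum x ts)) addrK mulfVK ?gt_eqF //; by rewrite addrC subrK.
Qed.


Definition filt (s : S) (x : seq S) := [seq u <- x | u != s].

Fixpoint proj (s : S) (x : seq S) (ts : seq R) : seq R :=
  match x, ts with
  | u :: x', t :: ts' => if u == s then proj s x' ts' else t :: proj s x' ts'
  | _, _ => [::] end.

Lemma Wt_proj (rho : S -> R) (s : S) x ts : rho s = 0%R ->
  Wt rho x ts = Wt rho (filt s x) (proj s x ts).
Proof.
have Wt_nil y : Wt rho y [::] = 0%R by case: y.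
move=> rs; elim: x ts => [|u x IH] [|t ts]; rewrite /= ?Wt_nil //.
rewrite /filt /=; have [->|us] := eqVneq u s; rewrite /= ?eqxx /=.
  by rewrite rs mulr0 add0r IH.
by rewrite IH.
Qed.

Lemma time_prob_proj (E : S -> R) (s : S) x (Ev : seq R -> Prop) :
  (forall u, (0 < E u)%R) ->
  time_prob (map E x) (fun ts => Ev (proj s x ts)) = time_prob (map E (filt s x)) Ev.
Proof.
move=> E0; elim: x Ev => [|u x IH] Ev //=.
rewrite /filt /=; case: eqP => [->|/eqP us] /=.
  under eq_integral do rewrite IH.
  by rewrite pdf_const// time_prob_ge0//; apply/allP => _ /mapP[v _ ->]; exact: ltW.
by apply: eq_integral => t _; rewrite -IH.
Qed.

Definition Fr (E : S -> R) (rho : S -> R) (r : R) (y : seq S) : \bar R :=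
  time_prob (map E y) (fun ts => (Wt rho y ts < r)%R).

Lemma Fr_ge0 E rho r y : (forall u, (0 < E u)%R) -> 0 <= Fr E rho r y.
Proof. by move=> E0; apply: time_prob_ge0; apply/allP => _ /mapP[v _ ->]; exact: ltW. Qed.

Lemma summand_eq (E : S -> R) (rho : S -> R) (g s : S) (r : R) x :
  (forall u, (0 < E u)%R) -> (0 < rho g)%R -> rho s = 0%R ->
  x != [::] -> all (fun x => x != g) x ->
  time_prob (map E x) (reach_event rho g r x) = Fr E rho r (filt s x).
Proof.
move=> E0 g0 s0 xn xg.
rewrite /Fr -time_prob_proj//; apply: time_prob_ext => ts sz ts0.
rewrite size_map in sz.
rewrite reach_eventE// -Wt_proj//.
Qed.


Lemma sum_tuple_cons n (f : n.+1.-tuple S -> \bar R) :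
  \sum_(t : n.+1.-tuple S) f t = \sum_(x : S) \sum_(t : n.-tuple S) f [tuple of x :: t].
Proof.
rewrite pair_big /=.
rewrite (reindex (fun p : S * n.-tuple S => [tuple of p.1 :: p.2])) //=.
exists (fun t : n.+1.-tuple S => (thead t, [tuple of behead t])).
  by move=> [x t] _ /=; congr pair; try exact: val_inj.
by move=> t _ /=; rewrite -tuple_eta.
Qed.

Definition Fu (s u : S) (F : seq S -> \bar R) : seq S -> \bar R :=
  if u == s then F else (fun y => F (u :: y)).

Definition term (P : S -> S -> R) (g s u : S) (F : seq S -> \bar R) (n : nat) : \bar R :=
  \sum_(ss : n.-tuple S | all (fun x => x != g) ss && (head g ss == u))
     ((path_weight P ss g)%:E * F (filt s ss)).

Lemma path_weight_ge0 (P : S -> S -> R) g ss : (forall u v, (0 <= P u v)%R) ->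
  (0 <= path_weight P ss g)%R.
Proof. by move=> P0; elim: ss => //= x ss IH; rewrite mulr_ge0. Qed.

Lemma term_ge0 P g s u F n : (forall u v, (0 <= P u v)%R) -> (forall y, 0 <= F y) ->
  0 <= term P g s u F n.
Proof.
move=> P0 F0; apply: sume_ge0 => t _; apply: mule_ge0 => //.
by rewrite lee_fin path_weight_ge0.
Qed.

Lemma term_rec P g s u F n : (forall u v, (0 <= P u v)%R) -> (forall y, 0 <= F y) ->
  term P g s u F n.+1 =
  if u == g then 0 else \sum_(v : S) (P u v)%:E * term P g s v (Fu s u F) n.
Proof.
move=> P0 F0.
rewrite /term big_mkcond sum_tuple_cons /=.
rewrite (bigD1 u) //= [X in (_ + X)%E]big1 ?adde0; last first.
  move=> x xu; apply: big1 => t _ /=.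
  by rewrite (negbTE xu) andbF.
rewrite ?eqxx ?andbT.
have [ug|ug] := eqVneq u g.
  by apply: big1 => t _.
rewrite /=.
under [RHS]eq_bigr => v _.
  rewrite ge0_sume_distrr; last first.
    move=> t _; apply: mule_ge0; [by rewrite lee_fin path_weight_ge0|].
    by rewrite /Fu; case: ifP.
  over.
rewrite /= -big_mkcond /=.
rewrite (partition_big (fun t : n.-tuple S => head g t) xpredT) //=.
apply: eq_bigr => v _; apply: eq_big => [t|t /andP[_ /eqP <-]]; first by rewrite andbT.
rewrite EFinM -muleA; congr (_ * (_ * _)).
by rewrite /filt /Fu /=; case: eqP => [->|/eqP us] //=; rewrite eqxx.
Qed.


Lemma term0 P g s u F : term P g s u F 0 = if u == g then F [::] else 0.
Proof.
rewrite /term big_mkcond (big_pred1 [tuple]) /=; last by move=> t; apply/esym/eqP; exact: tuple0.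
by rewrite eq_sym; case: eqP => _ //=; rewrite mul1e.
Qed.

Definition Phi P g s u F := \sum_(0 <= n <oo) term P g s u F n.

Lemma Phi_ge0 P g s u F : (forall u v, (0 <= P u v)%R) -> (forall y, 0 <= F y) ->
  0 <= Phi P g s u F.
Proof. by move=> P0 F0; apply: nneseries_ge0 => n _ _; exact: term_ge0. Qed.

Lemma Fu_ge0 s u F : (forall y, 0 <= F y) -> forall y, 0 <= Fu s u F y.
Proof. by rewrite /Fu; case: ifP. Qed.

Lemma Phi_fix P g s u F : (forall u v, (0 <= P u v)%R) -> (forall y, 0 <= F y) ->
  Phi P g s u F =
  if u == g then F [::] else \sum_(v : S) (P u v)%:E * Phi P g s v (Fu s u F).
Proof.
move=> P0 F0; rewrite /Phi nneseries_recl //; last by move=> k _; exact: term_ge0.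
rewrite term0 -nneseries_addn; last by move=> k; exact: term_ge0.
under eq_eseriesr do rewrite addn1 term_rec //.
case: eqP => _.
  by rewrite eseries0 ?adde0.
rewrite add0e nneseries_sum; last first.
  by move=> v n _; apply: mule_ge0; [rewrite lee_fin|exact: term_ge0 (Fu_ge0 _ _ F0)].
apply: eq_bigr => v _; rewrite nneseriesZl //.
by move=> n _; exact: term_ge0 (Fu_ge0 _ _ F0).
Qed.

Lemma Phi_least P g s (Psi : S -> (seq S -> \bar R) -> \bar R) :
  (forall u v, (0 <= P u v)%R) ->
  (forall u F, (forall y, 0 <= F y) -> 0 <= Psi u F) ->
  (forall F, (forall y, 0 <= F y) -> F [::] <= Psi g F) ->
  (forall u F, (forall y, 0 <= F y) -> u != g ->
     \sum_(v : S) (P u v)%:E * Psi v (Fu s u F) <= Psi u F) ->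
  forall u F, (forall y, 0 <= F y) -> Phi P g s u F <= Psi u F.
Proof.
move=> P0 Psi0 Psig Psiu.
have H N : forall u F, (forall y, 0 <= F y) ->
    \sum_(0 <= n < N) term P g s u F n <= Psi u F.
  elim: N => [|N IH] u F F0; first by rewrite big_geq //; exact: Psi0.
  rewrite big_nat_recl // term0.
  under eq_bigr do rewrite term_rec //.
  case: eqP => [->|/eqP ug].
    by rewrite big1 ?adde0 //; exact: Psig.
  rewrite add0e exchange_big /=.
  apply: le_trans (Psiu u F F0 ug); apply: lee_sum => v _.
  rewrite -ge0_sume_distrr; last by move=> n _; exact: term_ge0 (Fu_ge0 _ _ F0).
  by apply: lee_wpmul2l; [rewrite lee_fin|exact: IH (Fu_ge0 _ _ F0)].
move=> u F F0; rewrite /Phi; apply: lime_le.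
  by apply: is_cvg_nneseries => n _ _; exact: term_ge0.
by apply: nearW => N; exact: H.
Qed.


Lemma row_split (P : S -> S -> R) (s : S) (Psi : S -> \bar R) :
  (forall u v, (0 <= P u v)%R) -> (P s s < 1)%R -> (forall v, 0 <= Psi v) ->
  \sum_(v : S) (P s v)%:E * Psi v =
  (P s s)%:E * Psi s + (1 - P s s)%:E * \sum_(v : S) (remove_selfloop P s s v)%:E * Psi v.
Proof.
move=> P0 p1 Psi0.
have p0 : (1 - P s s != 0)%R by rewrite subr_eq0 eq_sym lt_eqF.
rewrite (bigD1 s) //= [X in _ = _ + _ * X](bigD1 s) //= /remove_selfloop ?eqxx mul0e add0e.
congr (_ + _); rewrite ge0_sume_distrr; last first.
  move=> v /negbTE vs; rewrite vs; apply: mule_ge0 => //.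
  by rewrite lee_fin divr_ge0 // subr_ge0 ltW.
apply: eq_bigr => v /negbTE vs; rewrite vs muleA -EFinM; congr (_ * _).
by rewrite mulrC divfK.
Qed.

End TP.

Unset Implicit Arguments.
Local Close Scope classical_set_scope.

Theorem lemma5 (R : realType) (S : finType) (P : S -> S -> R) (E : S -> R)
    (rho : S -> R) (g s : S) :
  is_ctmc P E ->
  (forall u, 0 <= rho u) ->
  P g g = 1 -> 0 < rho g ->
  rho s = 0 -> 0 < P s s -> P s s < 1 ->
  forall r : R, 0 <= r ->
    reach_prob P E rho g s r = reach_prob (remove_selfloop P s) E rho g s r.
Proof.
move=> [P0 Psum E0] rho0 Pgg rhog rhos ps0 ps1 r r0.
have sg : s != g by apply/eqP => esg; move: ps1; rewrite esg Pgg ltxx.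
set F := Fr E rho r.
have F0 : forall y, (0 <= F y)%E by move=> y; exact: Fr_ge0.
set P' := remove_selfloop P s.
have P'0 : forall u v, 0 <= P' u v.
  move=> u v; rewrite /P' /remove_selfloop; case: ifP => // _; case: ifP => // _.
  by rewrite divr_ge0 // subr_ge0 ltW.
have red Q : reach_prob Q E rho g s r = Phi Q g s s F.
  rewrite /reach_prob /Phi; apply: eq_eseriesr => n _; apply: eq_bigr => ss /andP[xg hs].
  rewrite (summand_eq (s:=s)) //.
  by apply/eqP => ss0; move: hs; rewrite ss0 /= eq_sym (negbTE sg).
have p1 : (1 - P s s != 0)%R by rewrite subr_eq0 eq_sym lt_eqF.
rewrite !red; apply/eqP; rewrite eq_le; apply/andP; split.
- apply: Phi_least => //.
  + by move=> u G G0; exact: Phi_ge0.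
  + by move=> G G0; rewrite Phi_fix // eqxx.
  move=> u G G0 ug; rewrite [X in (_ <= X)%E]Phi_fix // (negbTE ug).
  have [->|us] := eqVneq u s; last first.
    by apply: lee_sum => v _; rewrite /P' /remove_selfloop (negbTE us).
  have Hfix := Phi_fix g s s P'0 G0; rewrite (negbTE sg) /Fu eqxx in Hfix.
  rewrite /Fu eqxx row_split //; last by move=> v; exact: Phi_ge0.
  rewrite -/P' -Hfix -ge0_muleDl ?lee_fin ?(ltW ps0) ?subr_ge0 ?(ltW ps1) //.
  by rewrite -EFinD addrC subrK mul1e.
- apply: Phi_least => //.
  + by move=> u G G0; exact: Phi_ge0.
  + by move=> G G0; rewrite Phi_fix // eqxx.
  move=> u G G0 ug; rewrite [X in (_ <= X)%E]Phi_fix // (negbTE ug).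
  have [->|us] := eqVneq u s; last first.
    by apply: lee_sum => v _; rewrite /P' /remove_selfloop (negbTE us).
  have Hfix := Phi_fix g s s P0 G0; rewrite (negbTE sg) /Fu eqxx in Hfix.
  rewrite /Fu eqxx -Hfix.
  rewrite row_split // in Hfix; last by move=> v; exact: Phi_ge0.
  move: Hfix.
  set a := Phi P g s s G.
  set D := (\sum_(v : S) (remove_selfloop P s s v)%:E * Phi P g s v G)%E.
  have a0 : (0 <= a)%E by exact: Phi_ge0.
  have D0 : (0 <= D)%E.
    by apply: sume_ge0 => v _; apply: mule_ge0; [rewrite lee_fin P'0|exact: Phi_ge0].
  rewrite -/P' -/D.
  case: a a0 => [x||//] a0; last by rewrite leey.
  case: D D0 => [y||//] D0 Hx; last first.
    by move: Hx; rewrite gt0_muley ?lte_fin ?subr_gt0 // -EFinM addey.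
  move: Hx; rewrite -!EFinM -EFinD => /eqP; rewrite eqe => /eqP hx.
  have : ((1 - P s s) * (y - x) = 0)%R.
    transitivity (P s s * x + (1 - P s s) * y - x)%R; first by ring.
    by rewrite -hx subrr.
  by move/eqP; rewrite mulf_eq0 (negbTE p1) /= subr_eq0 => /eqP ->.
Qed.
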